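(* Let $m$ be a positive integer. The bra-ket $\mathcal R$-dioid $C_m$ is isomorphic, as a Kleene algebra, to its matrix Kleene algebra $\mathrm{Mat}_{m\times m}(C_m)$.
   Context: An $\mathcal R$-dioid is a dioid in which every regular subset $A$ of its multiplicative monoid has a least upper bound $\sum A$ with $\sum(AB)=(\sum A)(\sum B)$; equivalently a $*$-continuous Kleene algebra. An $\mathcal R$-congruence is a semiring congruence $\rho$ such that regular sets with equal downward closures modulo $\rho$ have congruent suprema. Let $\Delta_m=\{p_0,\dots,p_{m-1},q_0,\dots,q_{m-1}\}$ and $\mathcal R\Delta_m^*$ the algebra of regular languages over $\Delta_m$ (union, concatenation, star). The bra-ket $\mathcal R$-dioid is $C_m=\mathcal R\Delta_m^*/\rho_m$, where $\rho_m$ is the least $\mathcal R$-congruence containing $p_iq_j=\delta_{i,j}$ for $i,j<m$ and $q_0p_0+\dots+q_{m-1}p_{m-1}=1$. $\mathrm{Mat}_{m\times m}(C_m)$ carries matrix sum, product and the standard matrix star. *)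

(* Defs.v *)
From Stdlib Require Import ClassicalEpsilon.
From mathcomp Require Import all_boot all_algebra.

Set Implicit Arguments.
Unset Strict Implicit.
Unset Printing Implicit Defensive.

Section Generic.
Variables (D : Type) (add mul : D -> D -> D) (one : D).

Definition dle (a b : D) := add a b = b.

Definition is_lub (U : D -> Prop) (s : D) :=
  (forall u, U u -> dle u s) /\ (forall t, (forall u, U u -> dle u t) -> dle s t).

Fixpoint prodl (s : seq D) : D :=
  if s is x :: s' then mul x (prodl s') else one.

Fixpoint all_in (U : D -> Prop) (s : seq D) : Prop :=
  if s is x :: s' then U x /\ all_in U s' else True.

Inductive rat_subset : (D -> Prop) -> Prop :=
| rat_empty : rat_subset (fun _ => False)
| rat_single a : rat_subset (fun x => x = a)
| rat_union U V : rat_subset U -> rat_subset V -> rat_subset (fun x => U x \/ V x)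
| rat_prod U V : rat_subset U -> rat_subset V ->
    rat_subset (fun x => exists u v, [/\ U u, V v & x = mul u v])
| rat_star U : rat_subset U ->
    rat_subset (fun x => exists s, all_in U s /\ x = prodl s)
| rat_ext U V : rat_subset U -> (forall x, U x <-> V x) -> rat_subset V.

Definition semiring_congruence (rho : D -> D -> Prop) :=
  [/\ (forall a, rho a a), (forall a b, rho a b -> rho b a),
      (forall a b c, rho a b -> rho b c -> rho a c) &
      (forall a a' b b', rho a a' -> rho b b' ->
         rho (add a b) (add a' b') /\ rho (mul a b) (mul a' b'))].

(* the downward closure of U modulo rho, i.e. the preimage of the downward
   closure of U/rho in D/rho:  d/rho <= u/rho  iff  rho (d + u) u *)
Definition down_mod (rho : D -> D -> Prop) (U : D -> Prop) (d : D) :=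
  exists u, U u /\ rho (add d u) u.

Definition R_congruence (rho : D -> D -> Prop) :=
  semiring_congruence rho /\
  forall U V s t, rat_subset U -> rat_subset V -> is_lub U s -> is_lub V t ->
    (forall d, down_mod rho U d <-> down_mod rho V d) -> rho s t.

End Generic.

Definition letter (m : nat) := ('I_m + 'I_m)%type.
Definition p_ {m} (i : 'I_m) : letter m := inl i.
Definition q_ {m} (i : 'I_m) : letter m := inr i.
Definition word m := seq (letter m).
Definition lang m := word m -> Prop.

Section Lang.
Variable m : nat.
Definition lempty : lang m := fun _ => False.
Definition leps : lang m := fun w => w = [::].
Definition lsym (a : letter m) : lang m := fun w => w = [:: a].
Definition lunion (L1 L2 : lang m) : lang m := fun w => L1 w \/ L2 w.
Definition lconc (L1 L2 : lang m) : lang m :=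
  fun w => exists u v, [/\ L1 u, L2 v & w = u ++ v].
Definition lstar (L : lang m) : lang m :=
  fun w => exists ws : seq (word m), all_in L ws /\ w = flatten ws.

Inductive regular : lang m -> Prop :=
| reg_empty : regular lempty
| reg_eps : regular leps
| reg_sym a : regular (lsym a)
| reg_union L1 L2 : regular L1 -> regular L2 -> regular (lunion L1 L2)
| reg_conc L1 L2 : regular L1 -> regular L2 -> regular (lconc L1 L2)
| reg_star L : regular L -> regular (lstar L)
| reg_ext L1 L2 : regular L1 -> (forall w, L1 w <-> L2 w) -> regular L2.

Definition RL := {L : lang m | regular L}.
Definition rzero : RL := exist _ _ reg_empty.
Definition rone : RL := exist _ _ reg_eps.
Definition rsym a : RL := exist _ _ (reg_sym a).
Definition radd (x y : RL) : RL := exist _ _ (reg_union (proj2_sig x) (proj2_sig y)).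
Definition rmul (x y : RL) : RL := exist _ _ (reg_conc (proj2_sig x) (proj2_sig y)).
Definition rstar (x : RL) : RL := exist _ _ (reg_star (proj2_sig x)).

Definition braket_gens (rho : RL -> RL -> Prop) :=
  (forall i j : 'I_m,
     rho (rmul (rsym (p_ i)) (rsym (q_ j))) (if i == j then rone else rzero)) /\
  rho (\big[radd/rzero]_(i < m) rmul (rsym (q_ i)) (rsym (p_ i))) rone.

Definition rho_m (x y : RL) : Prop :=
  forall rho, R_congruence radd rmul rone rho -> braket_gens rho -> rho x y.

Definition Cm := {P : RL -> Prop | exists x, P = rho_m x}.
Definition cls (x : RL) : Cm := exist _ (rho_m x) (ex_intro _ x erefl).
Definition rep (c : Cm) : RL :=
  proj1_sig (constructive_indefinite_description _ (proj2_sig c)).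
Definition cadd (c d : Cm) : Cm := cls (radd (rep c) (rep d)).
Definition cmul (c d : Cm) : Cm := cls (rmul (rep c) (rep d)).
Definition czero : Cm := cls rzero.
Definition cone : Cm := cls rone.
Definition cstar (c : Cm) : Cm := cls (rstar (rep c)).
End Lang.

Record kleene_ops := KleeneOps {
  kcar :> Type;
  kadd : kcar -> kcar -> kcar;
  kmul : kcar -> kcar -> kcar;
  kzero : kcar;
  kone : kcar;
  kstar : kcar -> kcar }.

Definition KA_iso (A B : kleene_ops) (f : A -> B) :=
  bijective f /\
  (forall x y, f (kadd x y) = kadd (f x) (f y)) /\
  (forall x y, f (kmul x y) = kmul (f x) (f y)) /\
  f (kzero A) = kzero B /\ f (kone A) = kone B /\
  (forall x, f (kstar x) = kstar (f x)).

Definition C_KA (m : nat) : kleene_ops :=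
  @KleeneOps (Cm m) (@cadd m) (@cmul m) (czero m) (cone m) (@cstar m).

Section Matrices.
Variable A : kleene_ops.

(* standard matrix star, by the block decomposition
   [[a, b], [c, d]]^* = [[f, f b d*], [d* c f, d* + d* c f b d*]]
   with f = (a + b d* c)^*, a of size 1x1 *)
Fixpoint mstarf (n : nat) : ('I_n -> 'I_n -> A) -> 'I_n -> 'I_n -> A :=
  match n return ('I_n -> 'I_n -> A) -> 'I_n -> 'I_n -> A with
  | 0 => fun _ _ _ => kzero A
  | n'.+1 => fun M =>
      let a := M ord0 ord0 in
      let b := fun j : 'I_n' => M ord0 (lift ord0 j) in
      let c := fun i : 'I_n' => M (lift ord0 i) ord0 in
      let ds := mstarf (fun i j : 'I_n' => M (lift ord0 i) (lift ord0 j)) in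
      let bds := fun j : 'I_n' => \big[@kadd A/kzero A]_(k < n') kmul (b k) (ds k j) in
      let dsc := fun i : 'I_n' => \big[@kadd A/kzero A]_(k < n') kmul (ds i k) (c k) in
      let f := kstar (kadd a (\big[@kadd A/kzero A]_(k < n') kmul (bds k) (c k))) in
      fun i j =>
        match unlift ord0 i, unlift ord0 j with
        | None, None => f
        | None, Some j' => kmul f (bds j')
        | Some i', None => kmul (dsc i') f
        | Some i', Some j' => kadd (ds i' j') (kmul (kmul (dsc i') f) (bds j'))
        end
  end.

Variable n : nat.
Definition mzero : 'M[A]_n := \matrix_(i, j) kzero A.
Definition mone : 'M[A]_n := \matrix_(i, j) if i == j then kone A else kzero A.
Definition madd (M N : 'M[A]_n) : 'M[A]_n := \matrix_(i, j) kadd (M i j) (N i j).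
Definition mmul (M N : 'M[A]_n) : 'M[A]_n :=
  \matrix_(i, j) \big[@kadd A/kzero A]_(k < n) kmul (M i k) (N k j).
Definition mstar (M : 'M[A]_n) : 'M[A]_n :=
  \matrix_(i, j) mstarf (fun i j => M i j) i j.

Definition Mat_KA : kleene_ops := @KleeneOps 'M[A]_n madd mmul mzero mone mstar.
End Matrices.

(* Main.v *)
Require Import Defs.
From Stdlib Require Import ClassicalEpsilon FunctionalExtensionality PropExtensionality ProofIrrelevance.
From HB Require Import structures.
From mathcomp Require Import all_boot all_algebra.
Set Implicit Arguments. Unset Strict Implicit. Unset Printing Implicit Defensive.

Section MS.
Variable A : kleene_ops.
Variable n : nat.
Variable M : 'I_n.+1 -> 'I_n.+1 -> A.
Let D := fun i j : 'I_n => M (lift ord0 i) (lift ord0 j).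
Let ds := mstarf D.
Let bds := fun j : 'I_n => \big[@kadd A/kzero A]_(k < n) kmul (M ord0 (lift ord0 k)) (ds k j).
Let dsc := fun i : 'I_n => \big[@kadd A/kzero A]_(k < n) kmul (ds i k) (M (lift ord0 k) ord0).
Let f := kstar (kadd (M ord0 ord0) (\big[@kadd A/kzero A]_(k < n) kmul (bds k) (M (lift ord0 k) ord0))).
Lemma mstarf00 : mstarf M ord0 ord0 = f.
Proof. by rewrite /= unlift_none. Qed.
Lemma mstarf0S j : mstarf M ord0 (lift ord0 j) = kmul f (bds j).
Proof. by rewrite /= unlift_none liftK. Qed.
Lemma mstarfS0 i : mstarf M (lift ord0 i) ord0 = kmul (dsc i) f.
Proof. by rewrite /= unlift_none liftK. Qed.
Lemma mstarfSS i j : mstarf M (lift ord0 i) (lift ord0 j) = kadd (ds i j) (kmul (kmul (dsc i) f) (bds j)).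
Proof. by rewrite /= !liftK. Qed.
End MS.
Section RLsec.
Variable m : nat.
Local Notation RL := (RL m).
Local Notation L x := (proj1_sig x).

Lemma RLext (x y : RL) : (forall w, L x w <-> L y w) -> x = y.
Proof.
case: x => [Lx px]; case: y => [Ly py] /= H.
have E : Lx = Ly by apply: functional_extensionality => w; apply: propositional_extensionality.
subst; f_equal; apply: proof_irrelevance.
Qed.

Lemma raddA : associative (@radd m).
Proof. move=> x y z; apply: RLext => w /=; rewrite /lunion; tauto. Qed.
Lemma raddC : commutative (@radd m).
Proof. move=> x y; apply: RLext => w /=; rewrite /lunion; tauto. Qed.
Lemma radd0 : left_id (rzero m) (@radd m).
Proof. move=> x; apply: RLext => w /=; rewrite /lunion /lempty; tauto. Qed.
Lemma raddI (x : RL) : radd x x = x.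
Proof. apply: RLext => w /=; rewrite /lunion; tauto. Qed.

Lemma rmulA : associative (@rmul m).
Proof.
move=> x y z; apply: RLext => w /=; rewrite /lconc; split.
- case=> u [v [Hu [u1 [v1 [H1 H2 ->]]] ->]].
  exists (u ++ u1), v1; split => //; last by rewrite catA.
  by exists u, u1.
- case=> u [v [[u1 [v1 [H1 H2 ->]]] Hv ->]].
  exists u1, (v1 ++ v); split => //; last by rewrite catA.
  by exists v1, v.
Qed.
Lemma rmul1l : left_id (rone m) (@rmul m).
Proof.
move=> x; apply: RLext => w /=; rewrite /lconc /leps; split.
- by case=> u [v [-> Hv ->]].
- by move=> H; exists [::], w.
Qed.
Lemma rmul1r : right_id (rone m) (@rmul m).
Proof.
move=> x; apply: RLext => w /=; rewrite /lconc /leps; split.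
- by case=> u [v [Hu -> ->]]; rewrite cats0.
- by move=> H; exists w, [::]; rewrite cats0.
Qed.
Lemma rmul0l : left_zero (rzero m) (@rmul m).
Proof. move=> x; apply: RLext => w /=; rewrite /lconc /lempty; split => //; by case=> u [v []]. Qed.
Lemma rmul0r : right_zero (rzero m) (@rmul m).
Proof. move=> x; apply: RLext => w /=; rewrite /lconc /lempty; split => //; by case=> u [v []]. Qed.
Lemma rmulDl : left_distributive (@rmul m) (@radd m).
Proof.
move=> x y z; apply: RLext => w /=; rewrite /lconc /lunion; split.
- case=> u [v [[Hu|Hu] Hv ->]]; [left|right]; by exists u, v.
- case=> [[u [v [Hu Hv ->]]]|[u [v [Hu Hv ->]]]]; exists u, v; split; tauto.
Qed.
Lemma rmulDr : right_distributive (@rmul m) (@radd m).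
Proof.
move=> x y z; apply: RLext => w /=; rewrite /lconc /lunion; split.
- case=> u [v [Hu [Hv|Hv] ->]]; [left|right]; by exists u, v.
- case=> [[u [v [Hu Hv ->]]]|[u [v [Hu Hv ->]]]]; exists u, v; split; tauto.
Qed.
Lemma rstar_unfold (r : RL) : rstar r = radd (rone m) (rmul r (rstar r)).
Proof.
apply: RLext => w /=; rewrite /lstar /lunion /leps /lconc; split.
- case=> [[|w1 ws] [Hall ->]]; first by left.
  case: Hall => H1 H2; right; exists w1, (flatten ws); split => //.
  by exists ws.
- case=> [->|[u [v [Hu [ws [Hws ->]] ->]]]]; first by exists [::].
  by exists (u :: ws).
Qed.

Local Notation rho_m := (@rho_m m).
Local Notation C := (Cm m).
Local Notation cls := (@cls m).
Local Notation RC rho := (R_congruence (@radd m) (@rmul m) (rone m) rho).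

Lemma RC_sc rho : RC rho -> semiring_congruence (@radd m) (@rmul m) rho.
Proof. by case. Qed.

Lemma rho_refl x : rho_m x x.
Proof. by move=> rho /RC_sc [H _ _ _]. Qed.
Lemma rho_sym x y : rho_m x y -> rho_m y x.
Proof. move=> H rho Hr Hg; have [_ S _ _] := RC_sc Hr; exact: S (H rho Hr Hg). Qed.
Lemma rho_trans x y z : rho_m x y -> rho_m y z -> rho_m x z.
Proof. move=> H1 H2 rho Hr Hg; have [_ _ T _] := RC_sc Hr; exact: T (H1 rho Hr Hg) (H2 rho Hr Hg). Qed.
Lemma rho_add x x' y y' : rho_m x x' -> rho_m y y' -> rho_m (radd x y) (radd x' y').
Proof. move=> H1 H2 rho Hr Hg; have [_ _ _ K] := RC_sc Hr; exact: (K _ _ _ _ (H1 rho Hr Hg) (H2 rho Hr Hg)).1. Qed.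
Lemma rho_mul x x' y y' : rho_m x x' -> rho_m y y' -> rho_m (rmul x y) (rmul x' y').
Proof. move=> H1 H2 rho Hr Hg; have [_ _ _ K] := RC_sc Hr; exact: (K _ _ _ _ (H1 rho Hr Hg) (H2 rho Hr Hg)).2. Qed.

Lemma cls_eq x y : rho_m x y -> cls x = cls y.
Proof.
move=> H; rewrite /Defs.cls.
have E : rho_m x = rho_m y.
  apply: functional_extensionality => z; apply: propositional_extensionality; split.
  - move=> H'; apply: rho_trans (rho_sym H) H'.
  - move=> H'; apply: rho_trans H H'.
move: (ex_intro _ x _) (ex_intro _ y _); rewrite E => p1 p2; f_equal; apply: proof_irrelevance.
Qed.

Lemma cls_inj x y : cls x = cls y -> rho_m x y.
Proof. move=> H; have: proj1_sig (cls x) y = proj1_sig (cls y) y by rewrite H.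
by move=> /= ->; apply: rho_refl. Qed.

Lemma repK (c : C) : cls (rep c) = c.
Proof.
rewrite /rep; case: (constructive_indefinite_description _ _) => x /= Hx.
case: c Hx => P HP /= E; subst P; rewrite /Defs.cls; f_equal; apply: proof_irrelevance.
Qed.

Lemma rep_cls x : rho_m (rep (cls x)) x.
Proof. apply: cls_inj; by rewrite repK. Qed.

Lemma caddE x y : cadd (cls x) (cls y) = cls (radd x y).
Proof. apply: cls_eq; apply: rho_add; apply: rep_cls. Qed.
Lemma cmulE x y : cmul (cls x) (cls y) = cls (rmul x y).
Proof. apply: cls_eq; apply: rho_mul; apply: rep_cls. Qed.

Lemma cls_ind (P : C -> Prop) : (forall x, P (cls x)) -> forall c, P c.
Proof. by move=> H c; rewrite -(repK c). Qed.

Lemma caddA : associative (@cadd m).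
Proof. by elim/cls_ind=> x; elim/cls_ind=> y; elim/cls_ind=> z; rewrite !caddE raddA. Qed.
Lemma caddC : commutative (@cadd m).
Proof. by elim/cls_ind=> x; elim/cls_ind=> y; rewrite !caddE raddC. Qed.
Lemma cadd0 : left_id (czero m) (@cadd m).
Proof. by elim/cls_ind=> x; rewrite /czero caddE radd0. Qed.
Lemma caddI (c : C) : cadd c c = c.
Proof. by elim/cls_ind: c => x; rewrite caddE raddI. Qed.
Lemma cmulA : associative (@cmul m).
Proof. by elim/cls_ind=> x; elim/cls_ind=> y; elim/cls_ind=> z; rewrite !cmulE rmulA. Qed.
Lemma cmul1l : left_id (cone m) (@cmul m).
Proof. by elim/cls_ind=> x; rewrite /cone cmulE rmul1l. Qed.
Lemma cmul1r : right_id (cone m) (@cmul m).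
Proof. by elim/cls_ind=> x; rewrite /cone cmulE rmul1r. Qed.
Lemma cmul0l : left_zero (czero m) (@cmul m).
Proof. by elim/cls_ind=> x; rewrite /czero cmulE rmul0l. Qed.
Lemma cmul0r : right_zero (czero m) (@cmul m).
Proof. by elim/cls_ind=> x; rewrite /czero cmulE rmul0r. Qed.
Lemma cmulDl : left_distributive (@cmul m) (@cadd m).
Proof. by elim/cls_ind=> x; elim/cls_ind=> y; elim/cls_ind=> z; rewrite !(caddE, cmulE) rmulDl. Qed.
Lemma cmulDr : right_distributive (@cmul m) (@cadd m).
Proof. by elim/cls_ind=> x; elim/cls_ind=> y; elim/cls_ind=> z; rewrite !(caddE, cmulE) rmulDr. Qed.

HB.instance Definition _ := Monoid.isComLaw.Build C (czero m) (@cadd m) caddA caddC cadd0.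
HB.instance Definition _ := Monoid.isLaw.Build C (cone m) (@cmul m) cmulA cmul1l cmul1r.
HB.instance Definition _ := Monoid.isMulLaw.Build C (czero m) (@cmul m) cmul0l cmul0r.
HB.instance Definition _ := Monoid.isAddLaw.Build C (@cmul m) (@cadd m) cmulDl cmulDr.

Lemma cstar_unfold (c : C) : cstar c = cadd (cone m) (cmul c (cstar c)).
Proof.
rewrite {1}/cstar rstar_unfold -caddE -cmulE repK; done.
Qed.

Definition cle (a b : C) := cadd a b = b.

Lemma cle_refl a : cle a a. Proof. exact: caddI. Qed.
Lemma cle_trans a b c : cle a b -> cle b c -> cle a c.
Proof. by rewrite /cle => H1 H2; rewrite -H2 caddA H1. Qed.
Lemma cle_add a b c : cle a c -> cle b c -> cle (cadd a b) c.
Proof. by rewrite /cle => H1 H2; rewrite -caddA H2 H1. Qed.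
Lemma cle_addl a b : cle a (cadd a b).
Proof. by rewrite /cle caddA caddI. Qed.
Lemma cle_addr a b : cle b (cadd a b).
Proof. by rewrite /cle caddC -caddA caddI. Qed.
Lemma cle_addE a b c : cle (cadd a b) c -> cle a c /\ cle b c.
Proof. move=> H; split; apply: cle_trans H; [exact: cle_addl|exact: cle_addr]. Qed.
Lemma cle_add2 a a' b b' : cle a a' -> cle b b' -> cle (cadd a b) (cadd a' b').
Proof. move=> H1 H2; apply: cle_add; [apply: cle_trans H1 (cle_addl _ _)|apply: cle_trans H2 (cle_addr _ _)]. Qed.
Lemma cle_mull c a b : cle a b -> cle (cmul c a) (cmul c b).
Proof. by rewrite /cle => H; rewrite -cmulDr H. Qed.
Lemma cle_mulr c a b : cle a b -> cle (cmul a c) (cmul b c).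
Proof. by rewrite /cle => H; rewrite -cmulDl H. Qed.
Lemma cle_mul a a' b b' : cle a a' -> cle b b' -> cle (cmul a b) (cmul a' b').
Proof. move=> H1 H2; apply: cle_trans (cle_mulr _ H1) (cle_mull _ H2). Qed.
Lemma cle_sum n (F G : 'I_n -> C) : (forall i, cle (F i) (G i)) ->
  cle (\big[@cadd m/czero m]_(i < n) F i) (\big[@cadd m/czero m]_(i < n) G i).
Proof. move=> H; apply: (big_ind2 cle) => //; [exact: cle_refl|move=> *; exact: cle_add2]. Qed.
Lemma cle_antisym a b : cle a b -> cle b a -> a = b.
Proof. by rewrite /cle => H1 H2; rewrite -H1 caddC H2. Qed.

Lemma dleP (x y : RL) : dle (@radd m) x y <-> (forall w, L x w -> L y w).
Proof.
rewrite /dle; split.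
- move=> <- w /= H; by left.
- move=> H; apply: RLext => w /=; rewrite /lunion; split; [case; [apply: H|done]|by right].
Qed.

Lemma cleE x y : cle (cls x) (cls y) <-> rho_m (radd x y) y.
Proof. rewrite /cle caddE; split; [exact: cls_inj|exact: cls_eq]. Qed.

Lemma lub_transfer (U : RL -> Prop) s t :
  rat_subset (@rmul m) (rone m) U -> is_lub (@radd m) U s ->
  (forall u, U u -> cle (cls u) (cls t)) -> cle (cls s) (cls t).
Proof.
move=> HU [Hub Hl] Hle; apply/cleE => rho Hr Hg.
have [[Rrefl Rsym Rtrans Rcong] Hsup] := Hr.
apply: (Hsup (fun x => U x \/ x = t) (fun x => x = t)).
- by apply: rat_union => //; apply: rat_single.
- exact: rat_single.
- split.
  + move=> u [Hu|->]; rewrite /dle.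
    * by rewrite raddA (Hub u Hu).
    * by rewrite raddC -raddA raddI.
  + move=> t' Ht'; rewrite /dle -raddA (Ht' t (or_intror erefl)).
    apply: Hl => u Hu; exact: Ht' u (or_introl Hu).
- by split; [move=> u ->; exact: raddI|move=> t' H; exact: H].
- move=> d; split.
  + case=> u [[Hu|->] Hd]; last by exists t.
    exists t; split => //.
    have H1 : rho (radd u t) t by apply: (proj1 (cleE u t) (Hle u Hu)).
    have H2 : rho (radd d t) (radd d (radd u t)).
      by apply: (Rcong _ _ _ _ (Rrefl d) (Rsym _ _ H1)).1.
    have H3 : rho (radd d (radd u t)) (radd u t).
      by rewrite raddA; apply: (Rcong _ _ _ _ Hd (Rrefl t)).1.
    exact: (Rtrans _ _ _ (Rtrans _ _ _ H2 H3) H1).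
  + case=> u [-> Hd]; exists t; split => //; by right.
Qed.

Lemma prodl_star r s : all_in (fun y => y = r) s ->
  forall w, L (prodl (@rmul m) (rone m) s) w -> L (rstar r) w.
Proof.
elim: s => [|x s IH] /=; first by move=> _ w ->; exists [::].
case=> -> Hs w [u [v [Hu Hv ->]]].
have [ws [Hws ->]] := IH Hs v Hv; by exists (u :: ws).
Qed.

Lemma star_prodl r w : L (rstar r) w ->
  exists s, all_in (fun y => y = r) s /\ L (prodl (@rmul m) (rone m) s) w.
Proof.
case=> ws [Hws ->]; elim: ws Hws => [|u ws IH] /=; first by exists [::].
case=> Hu /IH [s [Hs Hw]]; exists (r :: s); split => //=.
by exists u, (flatten ws).
Qed.

Lemma cstar_ind (c u v : C) : cle (cadd u (cmul c v)) v -> cle (cmul (cstar c) u) v.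
Proof.
move=> H; have [Huv Hcv] := cle_addE H.
rewrite -(repK u) -(repK v) /cstar cmulE.
set r := rep c; set t := rep u; set tau := rep v.
pose U := fun x => exists a b, [/\ (exists s, all_in (fun y => y = r) s /\ a = prodl (@rmul m) (rone m) s), b = t & x = rmul a b].
apply: (lub_transfer (U := U)).
- apply: rat_prod; [apply: rat_star; apply: rat_single|apply: rat_single].
- split.
  + move=> x [a [b [[s [Hs ->]] -> ->]]]; apply/dleP => w [w1 [w2 [H1 H2 ->]]].
    exists w1, w2; split => //; exact: prodl_star Hs _ H1.
  + move=> t' Ht'; apply/dleP => w [w1 [w2 [H1 H2 ->]]].
    have [s [Hs Hw1]] := star_prodl H1.
    have := Ht' (rmul (prodl (@rmul m) (rone m) s) t) _.
    move=> /(_ _)/dleP; apply.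
      by exists (prodl (@rmul m) (rone m) s), t; split => //; exists s.
    by exists w1, w2.
- move=> x [a [b [[s [Hs ->]] -> ->]]]; rewrite repK.
  elim: s Hs => [|y s IH] /=.
  + by move=> _; rewrite rmul1l /t repK.
  + case=> -> Hs; rewrite -rmulA -cmulE /r repK.
    apply: cle_trans (cle_mull c (IH Hs)) Hcv.
Qed.

Definition fmul n k l (X : 'I_n -> 'I_k -> C) (Y : 'I_k -> 'I_l -> C) : 'I_n -> 'I_l -> C :=
  fun i j => \big[@cadd m/czero m]_(t < k) cmul (X i t) (Y t j).
Definition fone n : 'I_n -> 'I_n -> C := fun i j => if i == j then cone m else czero m.

Lemma sum_delta_l n (i : 'I_n) (F : 'I_n -> C) :
  \big[@cadd m/czero m]_(t < n) cmul (fone i t) (F t) = F i.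
Proof.
rewrite (bigD1 i) //= big1 /fone ?eqxx ?cmul1l ?(Monoid.mulm1 (@cadd m)) // => t Ht.
by rewrite eq_sym (negbTE Ht) cmul0l.
Qed.
Lemma sum_delta_r n (j : 'I_n) (F : 'I_n -> C) :
  \big[@cadd m/czero m]_(t < n) cmul (F t) (fone t j) = F j.
Proof.
rewrite (bigD1 j) //= big1 /fone ?eqxx ?cmul1r ?(Monoid.mulm1 (@cadd m)) // => t Ht.
by rewrite (negbTE Ht) cmul0r.
Qed.

Lemma one_le_star e : cle (cone m) (cstar e).
Proof. rewrite (cstar_unfold e); exact: cle_addl. Qed.
Lemma mul_le_star e : cle (cmul e (cstar e)) (cstar e).
Proof. rewrite {2}(cstar_unfold e); exact: cle_addr. Qed.
Lemma cadd0r : right_id (czero m) (@cadd m).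
Proof. by move=> x; rewrite caddC cadd0. Qed.

Lemma ceq_le a b : a = b -> cle a b.
Proof. move=> ->; exact: cle_refl. Qed.

Lemma mstar_props n (M : 'I_n -> 'I_n -> C) :
  (forall i j, cle (cadd (fone i j) (fmul M (@mstarf (C_KA m) _ M) i j)) (@mstarf (C_KA m) _ M i j)) /\
  (forall k (X Y : 'I_n -> 'I_k -> C),
     (forall i j, cle (cadd (X i j) (fmul M Y i j)) (Y i j)) ->
     forall i j, cle (fmul (@mstarf (C_KA m) _ M) X i j) (Y i j)).
Proof.
elim: n M => [|n IH] M; first by split; [case|move=> k X Y _; case].
pose a := M ord0 ord0.
pose b := fun k : 'I_n => M ord0 (lift ord0 k).
pose c := fun k : 'I_n => M (lift ord0 k) ord0.
pose D := fun i j : 'I_n => M (lift ord0 i) (lift ord0 j).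
pose ds := @mstarf (C_KA m) _ D.
pose bds := fun j : 'I_n => \big[@cadd m/czero m]_(k < n) cmul (b k) (ds k j).
pose dsc := fun i : 'I_n => \big[@cadd m/czero m]_(k < n) cmul (ds i k) (c k).
pose X0 := \big[@cadd m/czero m]_(k < n) cmul (bds k) (c k).
pose e := cadd a X0.
pose f := cstar e.
have S00 : @mstarf (C_KA m) _ M ord0 ord0 = f := @mstarf00 (C_KA m) n M.
have S0S : forall j, @mstarf (C_KA m) _ M ord0 (lift ord0 j) = cmul f (bds j) := @mstarf0S (C_KA m) n M.
have SS0 : forall i, @mstarf (C_KA m) _ M (lift ord0 i) ord0 = cmul (dsc i) f := @mstarfS0 (C_KA m) n M.
have SSS : forall i j, @mstarf (C_KA m) _ M (lift ord0 i) (lift ord0 j) =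
   cadd (ds i j) (cmul (cmul (dsc i) f) (bds j)) := @mstarfSS (C_KA m) n M.
have [IHa IHb] := IH D.
have H1 : forall Z, \big[@cadd m/czero m]_(k < n) cmul (b k) (cmul (dsc k) Z) = cmul X0 Z.
  move=> Z; under eq_bigr do rewrite cmulA; rewrite -big_distrl /=; congr cmul.
  rewrite /X0 /dsc /bds; under eq_bigr do rewrite big_distrr /=.
  under [RHS]eq_bigr do rewrite big_distrl /=.
  rewrite exchange_big /=; apply: eq_bigr => k _; apply: eq_bigr => l _; by rewrite cmulA.
have Lc : forall i, cle (cadd (c i) (\big[@cadd m/czero m]_(k < n) cmul (D i k) (dsc k))) (dsc i).
  move=> i; rewrite -{1}(sum_delta_l i c).
  have -> : \big[@cadd m/czero m]_(k < n) cmul (D i k) (dsc k) =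
            \big[@cadd m/czero m]_(l < n) cmul (fmul D ds i l) (c l).
    rewrite /fmul /dsc; under eq_bigr do rewrite big_distrr /=.
    under [RHS]eq_bigr do rewrite big_distrl /=.
    rewrite exchange_big /=; apply: eq_bigr => k _; apply: eq_bigr => l _; by rewrite cmulA.
  rewrite -big_split /=; apply: cle_sum => l; rewrite -cmulDl; apply: cle_mulr; exact: IHa.
have onef := one_le_star e; have eff : cle (cmul e f) f := mul_le_star e.
have ae : cle a e := cle_addl _ _.
have Xe : cle X0 e := cle_addr _ _.
have af : forall Z, cle (cmul a (cmul f Z)) (cmul f Z).
  move=> Z; rewrite cmulA; apply: cle_mulr; exact: cle_trans (cle_mulr _ ae) eff.
have Xf : forall Z, cle (cmul X0 (cmul f Z)) (cmul f Z).
  move=> Z; rewrite cmulA; apply: cle_mulr; exact: cle_trans (cle_mulr _ Xe) eff.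
have le_f : forall Z, cle Z (cmul f Z).
  move=> Z; rewrite -{1}(cmul1l Z); exact: cle_mulr.
split.
- move=> i j; rewrite /fmul big_ord_recl.
  case: (unliftP ord0 i) => [i'|] ->; case: (unliftP ord0 j) => [j'|] ->.
  + rewrite SSS S0S /fone (inj_eq (@lift_inj _ ord0)).
    under eq_bigr do rewrite SSS cmulDr.
    rewrite big_split /=.
    have [I1 I2] := cle_addE (IHa i' j').
    apply: cle_add; first exact: cle_trans I1 (cle_addl _ _).
    apply: cle_add; last apply: cle_add.
    * apply: cle_trans (cle_addr (ds i' j') _); rewrite -!cmulA; apply: cle_trans (cle_mulr _ (Lc i')).
      rewrite cmulDl; exact: cle_addl.
    * apply: cle_trans I2 (cle_addl _ _).
    * apply: cle_trans (cle_addr (ds i' j') _); rewrite -!cmulA; apply: cle_trans (cle_mulr _ (Lc i')).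
      rewrite cmulDl; apply: cle_trans (cle_addr _ _); rewrite big_distrl /=.
      apply: ceq_le; apply: eq_bigr => k _; by rewrite !cmulA.
  + rewrite SS0 S00 /fone eq_sym (negbTE (neq_lift _ _)) cadd0.
    under eq_bigr do rewrite SS0 cmulA.
    rewrite -big_distrl -cmulDl; apply: cle_mulr; exact: Lc.
  + rewrite !S0S /fone (negbTE (neq_lift _ _)) cadd0.
    under eq_bigr do rewrite SSS cmulDr.
    rewrite big_split; apply: cle_add; first exact: af.
    apply: cle_add; first exact: le_f.
    under eq_bigr do rewrite -cmulA.
    rewrite H1; exact: Xf.
  + rewrite S00 /fone eqxx.
    under eq_bigr do rewrite SS0.
    apply: cle_add; first exact: onef.
    apply: cle_add; first exact: cle_trans (cle_mulr _ ae) eff.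
    rewrite H1; exact: cle_trans (cle_mulr _ Xe) eff.
- move=> k X Y HY.
  pose x := fun l => X ord0 l.
  pose X' := fun i l => X (lift ord0 i) l.
  pose y := fun l => Y ord0 l.
  pose Z := fun i l => Y (lift ord0 i) l.
  have HY0 : forall l, cle (cadd (x l) (cadd (cmul a (y l))
      (\big[@cadd m/czero m]_(t < n) cmul (b t) (Z t l)))) (y l).
    by move=> l; have := HY ord0 l; rewrite /fmul big_ord_recl.
  have HYS : forall i l, cle (cadd (X' i l) (cadd (cmul (c i) (y l))
      (\big[@cadd m/czero m]_(t < n) cmul (D i t) (Z t l)))) (Z i l).
    by move=> i l; have := HY (lift ord0 i) l; rewrite /fmul big_ord_recl.
  pose X'' := fun i l => cadd (X' i l) (cmul (c i) (y l)).
  have G1 : forall i l, cle (fmul ds X'' i l) (Z i l).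
    apply: IHb => i l; have [h1 h2] := cle_addE (HYS i l); have [h3 h4] := cle_addE h2.
    apply: cle_add; [apply: cle_add|]; done.
  have K : forall l, cle (\big[@cadd m/czero m]_(t < n) cmul (bds t) (X'' t l)) (y l).
    move=> l.
    have -> : \big[@cadd m/czero m]_(t < n) cmul (bds t) (X'' t l) =
              \big[@cadd m/czero m]_(s < n) cmul (b s) (fmul ds X'' s l).
      rewrite /fmul /bds; under eq_bigr do rewrite big_distrl /=.
      under [RHS]eq_bigr do rewrite big_distrr /=.
      rewrite exchange_big /=; apply: eq_bigr => s _; apply: eq_bigr => t _; by rewrite cmulA.
    apply: cle_trans (cle_sum (fun s => cle_mull (b s) (G1 s l))) _.
    have [_ h] := cle_addE (HY0 l); exact: (cle_addE h).2.
  have G2 : forall l, cle (cmul f (cadd (x l) (\big[@cadd m/czero m]_(t < n) cmul (bds t) (X' t l)))) (y l).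
    move=> l; apply: cstar_ind.
    have [hx h'] := cle_addE (HY0 l); have [ha hb] := cle_addE h'.
    rewrite /e cmulDl; apply: cle_add; (apply: cle_add; first done).
    + apply: cle_trans (K l); apply: cle_sum => t; apply: cle_mull; exact: cle_addl.
    + rewrite /X0 big_distrl /=; apply: cle_trans (K l); apply: cle_sum => t.
      rewrite -cmulA; apply: cle_mull; exact: cle_addr.
  move=> i l; rewrite /fmul big_ord_recl.
  case: (unliftP ord0 i) => [i'|] ->.
  + rewrite SS0; under eq_bigr do rewrite SSS cmulDl.
    rewrite big_split.
    have ER : fmul ds X'' i' l = cadd (\big[@cadd m/czero m]_(t < n) cmul (ds i' t) (X' t l))
                                      (cmul (dsc i') (y l)).
      rewrite /fmul /X''; under eq_bigr do rewrite cmulDr.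
      rewrite big_split; congr cadd; rewrite /dsc big_distrl /=; apply: eq_bigr => t _; by rewrite cmulA.
    apply: cle_trans (G1 i' l); rewrite ER.
    have W : cle (cmul (dsc i') (cmul f (cadd (x l) (\big[@cadd m/czero m]_(t < n) cmul (bds t) (X' t l)))))
                 (cmul (dsc i') (y l)) by apply: cle_mull; exact: G2.
    apply: cle_add.
      apply: cle_trans (cle_addr _ _); apply: cle_trans W; rewrite -cmulA; apply: cle_mull; apply: cle_mull; exact: cle_addl.
    apply: cle_add; first exact: cle_addl.
    apply: cle_trans (cle_addr _ _); apply: cle_trans W.
    under eq_bigr do rewrite -cmulA.
    rewrite -big_distrr /= -cmulA; apply: cle_mull; apply: cle_mull; exact: cle_addr.
  + rewrite S00; under eq_bigr do rewrite S0S -cmulA.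
    rewrite -big_distrr -cmulDr; exact: G2.
Qed.

Definition Pc (i : 'I_m) : C := cls (rsym (p_ i)).
Definition Qc (i : 'I_m) : C := cls (rsym (q_ i)).

Lemma PQ i j : cmul (Pc i) (Qc j) = fone i j.
Proof.
rewrite /Pc /Qc cmulE.
have H : rho_m (rmul (rsym (p_ i)) (rsym (q_ j))) (if i == j then rone m else rzero m).
  by move=> rho _ [H _]; exact: H i j.
by rewrite (cls_eq H) /fone; case: (i == j).
Qed.

Lemma sumQP : \big[@cadd m/czero m]_(i < m) cmul (Qc i) (Pc i) = cone m.
Proof.
under eq_bigr do rewrite /Qc /Pc cmulE.
rewrite -(big_morph cls (fun x y => esym (caddE x y)) (erefl (czero m))).
apply: cls_eq => rho _ [_ H]; exact: H.
Qed.

Lemma mul_split (u v : C) :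
  cmul u v = \big[@cadd m/czero m]_(k < m) cmul (cmul u (Qc k)) (cmul (Pc k) v).
Proof.
rewrite -{1}[u]cmul1r -sumQP big_distrr /= big_distrl /=.
apply: eq_bigr => k _; by rewrite !cmulA.
Qed.

Definition fmap (c : C) : 'M[C]_m := \matrix_(i, j) cmul (cmul (Pc i) c) (Qc j).
Definition gmap (M : 'M[C]_m) : C :=
  \big[@cadd m/czero m]_(i < m) \big[@cadd m/czero m]_(j < m) cmul (cmul (Qc i) (M i j)) (Pc j).

Lemma fmapK : cancel fmap gmap.
Proof.
move=> c; rewrite /gmap.
have E : c = cmul (cmul (\big[@cadd m/czero m]_(i < m) cmul (Qc i) (Pc i)) c)
                  (\big[@cadd m/czero m]_(j < m) cmul (Qc j) (Pc j)).
  by rewrite sumQP cmul1l cmul1r.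
rewrite [in RHS]E big_distrr /=.
under [RHS]eq_bigr do rewrite big_distrl /= big_distrl /=.
rewrite [RHS]exchange_big /=; apply: eq_bigr => i _; apply: eq_bigr => j _.
by rewrite mxE !cmulA.
Qed.

Lemma gmapK : cancel gmap fmap.
Proof.
move=> M; apply/matrixP => k l; rewrite mxE /gmap big_distrr /= big_distrl /=.
transitivity (\big[@cadd m/czero m]_(i < m) cmul (fone k i)
                (\big[@cadd m/czero m]_(j < m) cmul (M i j) (fone j l))).
  apply: eq_bigr => i _; rewrite big_distrr /= big_distrr /= big_distrl /=.
  apply: eq_bigr => j _; by rewrite -!PQ !cmulA.
rewrite (sum_delta_l k (fun i => \big[@cadd m/czero m]_(j < m) cmul (M i j) (fone j l))).
exact: (sum_delta_r l (fun j => M k j)).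
Qed.

Lemma fmap_mulE u v i j :
  \big[@cadd m/czero m]_(k < m) cmul (fmap u i k) (fmap v k j) = fmap (cmul u v) i j.
Proof.
rewrite [RHS]mxE (_ : cmul (cmul (Pc i) (cmul u v)) (Qc j) = cmul (cmul (Pc i) u) (cmul v (Qc j))); last by rewrite !cmulA.
rewrite (mul_split (cmul (Pc i) u)).
apply: eq_bigr => k _; by rewrite !mxE !cmulA.
Qed.

Lemma fmap_le u v : (forall i j, cle (fmap u i j) (fmap v i j)) -> cle u v.
Proof.
move=> H; rewrite /cle -[LHS]fmapK -[RHS]fmapK; congr gmap.
apply/matrixP => i j; have := H i j; rewrite /cle !mxE => E.
by rewrite cmulDr cmulDl E.
Qed.

End RLsec.

Theorem theorem11 (m : nat) (hm : 0 < m) :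
  exists f : C_KA m -> Mat_KA (C_KA m) m, KA_iso f.
Proof.
exists (@fmap m); split; first by exists (@gmap m); [exact: fmapK|exact: gmapK].
split; [|split; [|split; [|split]]].
- move=> x y /=; apply/matrixP => i j; by rewrite !mxE cmulDr cmulDl.
- move=> x y /=; apply/matrixP => i j; rewrite -fmap_mulE /mmul [RHS]mxE.
  apply: eq_bigr => k _; done.
- apply/matrixP => i j; by rewrite !mxE /= cmul0r cmul0l.
- apply/matrixP => i j; by rewrite !mxE /= cmul1r PQ.
- move=> c /=; apply/matrixP => i j; rewrite [RHS]mxE.
  set Mf := (fun i j => fmap c i j).
  have [Pa Pb] := mstar_props Mf.
  pose T := fun i j => fmap (cstar c) i j.
  apply: cle_antisym.
  + pose S := fun i j => @mstarf (C_KA m) _ Mf i j.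
    pose d := gmap (\matrix_(i, j) S i j)%R.
    have Hd : fmap d = (\matrix_(i, j) S i j)%R by rewrite /d gmapK.
    have : cle (cstar c) d.
      rewrite -[cstar c]cmul1r; apply: cstar_ind; apply: fmap_le => k l.
      have -> : fmap (cadd (cone m) (cmul c d)) k l = cadd (fone m k l) (fmul Mf S k l).
        rewrite mxE cmulDr cmulDl cmul1r PQ; congr cadd.
        transitivity (fmap (cmul c d) k l); first by rewrite mxE.
        rewrite -fmap_mulE Hd /fmul; apply: eq_bigr => t _; congr cmul; exact: mxE.
      rewrite Hd mxE; exact: Pa.
    move=> H; apply: (cle_trans (b := fmap d i j)); first by rewrite !mxE; apply: cle_mulr; apply: cle_mull.
    rewrite Hd mxE; exact: cle_refl.
  + have := Pb m (@fone m m) T _ i j.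
    rewrite /fmul (sum_delta_r j (fun t => @mstarf (C_KA m) _ Mf i t)); apply.
    move=> k l; apply: ceq_le; rewrite /T.
    rewrite /fmul (eq_bigr (fun t => cmul (fmap c k t) (fmap (cstar c) t l))) // fmap_mulE.
    rewrite -PQ !mxE -{1}[Pc k]cmul1r -cmulDl -cmulDr -cstar_unfold; done.
Qed.
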